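(* Let $w\ge0$ and let $\tilde x:[0,1]\to\mathbb R$ solve $$\tilde x'(s)=(w+1)-w\tanh\bigl(s\,\tilde x(s)\bigr),\qquad \tilde x(0)=x.$$ If $x\ge-\frac{\sqrt{w+1}}{2}$, then $\tilde x(1)\ge\frac{\sqrt{w+1}}{4}$.
   Context: This ODE is the (time-reparametrized, $T\to\infty$ limit of the) guided probability flow ODE with guidance parameter $w$ toward the component $z=+1$ for the Gaussian mixture $\frac12\mathcal N(1,1)+\frac12\mathcal N(-1,1)$; $\tilde x(1)$ is the output sample for initialization $x$. *)

(* Defs.v *)
From Stdlib Require Import Reals.
From Coquelicot Require Import Coquelicot.
Open Scope R_scope.

(* Main.v *)
Require Import Defs.
From Stdlib Require Import Reals Lra.
From Coquelicot Require Import Coquelicot.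
Open Scope R_scope.
Lemma one_m_tanh t : 1 - tanh t = 2 / (exp (2*t) + 1).
Proof.
  unfold tanh, sinh, cosh.
  replace (2*t) with (t + t) by ring. rewrite exp_plus; unfold Rminus; rewrite exp_Ropp.
  assert (H := exp_pos t). field_simplify; [reflexivity| nra | split; nra].
Qed.
Lemma key w t y : 0 <= w -> t <= y -> 0 <= y ->
  (w+1) - w*tanh t >= (w+1)*exp(-(2*y)) /\ (w+1) - w*tanh t >= 1.
Proof.
  intros Hw Hty Hy.
  assert (E1 : exp (2*t) <= exp (2*y)) by (apply exp_le_3 || (destruct (Req_dec t y); [subst; lra| left; apply exp_increasing; lra])).
  assert (E0 : 1 <= exp (2*y)) by (rewrite <- exp_0; destruct (Req_dec y 0); [subst; rewrite Rmult_0_r; lra| left; apply exp_increasing; lra]).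
  assert (Ht := one_m_tanh t). assert (P := exp_pos (2*t)).
  rewrite exp_Ropp.
  assert (A : 1 - tanh t >= / exp (2*y)).
  { rewrite Ht. apply Rle_ge. apply (Rmult_le_reg_r (exp (2*y))); [lra|].
    rewrite Rinv_l by lra. unfold Rdiv. apply (Rmult_le_reg_r (exp (2*t)+1)); [lra|].
    field_simplify; lra. }
  assert (B : 0 < 1 - tanh t) by (rewrite Ht; apply Rdiv_lt_0_compat; lra).
  assert (C : / exp (2*y) <= 1) by (rewrite <- Rinv_1; apply Rinv_le_contravar; lra).
  split; nra.
Qed.

Lemma exp_half : exp (-(1/2)) <= 5/8.
Proof.
  assert (H := exp_ineq1 (1/8) ltac:(lra)).
  assert (E : exp (1/2) = exp (1/8) * exp (1/8) * (exp (1/8) * exp (1/8))).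
  { rewrite <- !exp_plus. f_equal. lra. }
  assert (E2 : exp (1/2) >= 8/5) by (rewrite E; assert (U : exp (1/8) * exp (1/8) > 81/64) by nra; nra).
  rewrite exp_Ropp. rewrite <- (Rinv_inv (5/8)). apply Rinv_le_contravar; lra.
Qed.

Theorem lemma4p2 (w x : R) (xt : R -> R) :
  0 <= w ->
  (forall s, 0 <= s <= 1 -> continuous xt s) ->
  (forall s, 0 < s < 1 -> is_derive xt s ((w + 1) - w * tanh (s * xt s))) ->
  xt 0 = x ->
  x >= - sqrt (w + 1) / 2 ->
  xt 1 >= sqrt (w + 1) / 4.
Proof.
  intros Hw Hc Hd H0 Hx.
  set (a := sqrt (w+1)) in *.
  assert (Ha2 : a * a = w + 1) by (apply sqrt_sqrt; lra).
  assert (Ha1 : 1 <= a) by (rewrite <- sqrt_1; apply sqrt_le_1_alt; lra).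
  set (D := fun s => (w + 1) - w * tanh (s * xt s)).
  assert (Hcp : forall s, 0 <= s <= 1 -> continuity_pt xt s)
    by (intros s Hs; apply continuity_pt_filterlim, Hc, Hs).
  destruct (Rlt_dec (xt 1) (a/4)) as [Hlt|Hge]; [|lra].
  assert (Hmono : forall s, 0 < s < 1 -> xt s <= xt 1).
  { intros s Hs.
    set (df := fun y => if Rlt_dec 0 y then if Rlt_dec y 1 then D y else 1 else 1).
    destruct (MVT_gen xt s 1 df) as [c [Hc1 Hc2]].
    - rewrite Rmin_left, Rmax_right by lra. intros y Hy. unfold df.
      destruct (Rlt_dec 0 y); [|lra]. destruct (Rlt_dec y 1); [|lra].
      apply Hd; lra.
    - rewrite Rmin_left, Rmax_right by lra. intros y Hy. apply Hcp; lra.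
    - assert (df c >= 0).
      { unfold df. destruct (Rlt_dec 0 c); [|lra]. destruct (Rlt_dec c 1); [|lra].
        unfold D. destruct (key w (c * xt c) (Rabs (c * xt c)) Hw) as [_ K];
        [apply Rle_abs|apply Rabs_pos|lra]. }
      nra. }
  set (b := a / 2). assert (Hb : b = a / 2) by reflexivity. clearbody b.
  set (g := fun s => xt s + 2 * a * exp (-(s * b))).
  set (dg := fun y => if Rlt_dec 0 y then if Rlt_dec y 1 then
                 D y - (w+1) * exp (-(y * b)) else 0 else 0).
  destruct (MVT_gen g 0 1 dg) as [c [Hc1 Hc2]].
  - rewrite Rmin_left, Rmax_right by lra. intros y Hy. unfold dg.
    destruct (Rlt_dec 0 y); [|lra]. destruct (Rlt_dec y 1); [|lra].
    unfold g. apply (is_derive_plus xt (fun s => 2 * a * exp (-(s * b)))).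
    + apply Hd; lra.
    + evar (v : R). replace (- ((w+1) * exp (-(y * b)))) with v.
      * auto_derive; [exact I|]. unfold v. reflexivity.
      * unfold v. rewrite <- Ha2. rewrite Hb; field.
  - rewrite Rmin_left, Rmax_right by lra. intros y Hy.
    apply continuity_pt_filterlim. unfold g.
    apply (continuous_plus xt (fun s => 2 * a * exp (-(s * b)))).
    + apply Hc; lra.
    + apply ex_derive_continuous. auto_derive. exact I.
  - assert (Hdg : dg c >= 0).
    { unfold dg. destruct (Rlt_dec 0 c); [|lra]. destruct (Rlt_dec c 1); [|lra].
      unfold D. assert (Hm := Hmono c ltac:(lra)).
      destruct (key w (c * xt c) (c * a / 4) Hw) as [K _]; [nra|nra|].
      replace (- (2 * (c * a / 4))) with (- (c * b)) in K by (rewrite Hb; field). lra. }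
    unfold g in Hc2.
    replace (- (0 * b)) with 0 in Hc2 by ring.
    replace (- (1 * b)) with (- (a / 2)) in Hc2 by (rewrite Hb; field).
    rewrite exp_0 in Hc2.
    assert (He : exp (- (a/2)) <= 5/8).
    { eapply Rle_trans; [|apply exp_half].
      destruct (Req_dec a 1); [subst; rewrite H; lra|].
      left. apply exp_increasing. lra. }
    assert (Hpos := exp_pos (-(a/2))).
    nra.
Qed.
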